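(* Let $a_0,a_1\in\mathbb{C}$ with $a_1\neq0$ such that the polynomial $f(x)=a_0+a_1x$ has no positive integer root, and let $\Lambda=a_0D+a_1DxD$. Then the monic polynomial sequences that are both $\Lambda$-Appell and orthogonal are exactly the Laguerre sequences with parameter $\alpha=a_0/a_1$, up to an affine transformation.
   Context: $\mathcal{P}$ is the space of complex polynomials, $D$ the derivative, $x$ multiplication by $x$, products are compositions. A monic polynomial sequence (MPS) is $\{B_n\}_{n\ge0}$ with $B_n$ monic of degree $n$. An MPS is $\Lambda$-Appell if $\Lambda B_{n+1}=\rho_nB_n$ for all $n\ge0$, where $\rho_n=(n+1)f(n+1)$. An MPS is orthogonal with respect to a linear functional $u$ on $\mathcal{P}$ if $\langle u,B_nB_m\rangle=0$ for $n\neq m$ and $\langle u,B_n^2\rangle\neq0$. The (monic) Laguerre sequence with parameter $\alpha\notin\mathbb{Z}^-$ is the monic orthogonal sequence whose functional $u$ satisfies $D(xu)+(x-\alpha-1)u=0$, where on functionals $\langle Du,p\rangle=-\langle u,p'\rangle$ and $\langle xu,p\rangle=\langle u,xp\rangle$. An affine transformation of an MPS $\{B_n\}$ is the MPS $\{c^{-n}B_n(cx+d)\}$ for constants $c\neq0$, $d$. *)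

(* Defs.v *)
(* Complex numbers are modelled as R[i] = complex R for an
   arbitrary real closed field R (R = the reals gives the usual C). *)
From HB Require Import structures.
From mathcomp Require Import all_boot all_order all_algebra.
From mathcomp Require Import complex.
Set Implicit Arguments. Unset Strict Implicit. Unset Printing Implicit Defensive.
Import Order.TTheory GRing.Theory Num.Theory.
Local Open Scope ring_scope.

Section Defs.
Variable C : fieldType.

Definition MPS (B : nat -> {poly C}) : Prop :=
  forall n, B n \is monic /\ size (B n) = n.+1.

Definition functional (u : {poly C} -> C) : Prop :=
  forall (a : C) (p q : {poly C}), u (a *: p + q) = a * u p + u q.

Definition orthogonal_wrt (B : nat -> {poly C}) (u : {poly C} -> C) : Prop :=
  (forall n m, n != m -> u (B n * B m) = 0) /\ (forall n, u (B n ^+ 2) != 0).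

Definition orthogonal_MPS (B : nat -> {poly C}) : Prop :=
  MPS B /\ exists u, functional u /\ orthogonal_wrt B u.

Definition Lam (a0 a1 : C) (p : {poly C}) : {poly C} :=
  a0 *: p^`() + a1 *: ('X * p^`())^`().

Definition rho (a0 a1 : C) (n : nat) : C := n.+1%:R * (a0 + a1 * n.+1%:R).

Definition Lam_Appell (a0 a1 : C) (B : nat -> {poly C}) : Prop :=
  MPS B /\ forall n, Lam a0 a1 (B n.+1) = rho a0 a1 n *: B n.

(* monic Laguerre sequence with parameter alpha: the monic orthogonal sequence
   whose functional u satisfies D(xu) + (x - alpha - 1) u = 0, i.e.
   for all p, -<u, x p'> + <u, (x - alpha - 1) p> = 0. *)
Definition Laguerre (alpha : C) (L : nat -> {poly C}) : Prop :=
  MPS L /\ exists u, functional u /\ orthogonal_wrt L u /\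
    forall p : {poly C}, - u ('X * p^`()) + u (('X - (alpha + 1)%:P) * p) = 0.

Definition affine (c d : C) (B : nat -> {poly C}) (n : nat) : {poly C} :=
  (c ^+ n)^-1 *: (B n \Po (c *: 'X + d%:P)).

End Defs.

(* Main.v *)
Require Import Defs.
From HB Require Import structures.
From mathcomp Require Import all_boot all_order all_algebra.
From mathcomp Require Import complex.
From mathcomp Require Import ring zify.
Import Order.TTheory GRing.Theory Num.Theory.
Local Open Scope ring_scope.
Set Implicit Arguments. Unset Strict Implicit. Unset Printing Implicit Defensive.

Lemma fun0 (C : fieldType) (u : {poly C} -> C) : functional u -> u 0 = 0.
Proof.
move=> hu; have := hu 1 0 0; rewrite scale1r addr0 mul1r => h.
by apply: (addrI (u 0)); rewrite addr0 -h.
Qed.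

Lemma funD (C : fieldType) (u : {poly C} -> C) p q : functional u -> u (p + q) = u p + u q.
Proof. by move=> hu; have := hu 1 p q; rewrite scale1r mul1r. Qed.

Lemma funZ (C : fieldType) (u : {poly C} -> C) a p : functional u -> u (a *: p) = a * u p.
Proof. by move=> hu; have := hu a p 0; rewrite !addr0 fun0 // addr0. Qed.

Lemma funN (C : fieldType) (u : {poly C} -> C) p : functional u -> u (- p) = - u p.
Proof. by move=> hu; rewrite -scaleN1r funZ // mulN1r. Qed.

Lemma funB (C : fieldType) (u : {poly C} -> C) p q : functional u -> u (p - q) = u p - u q.
Proof. by move=> hu; rewrite funD // funN. Qed.

Lemma MPS_coef (C : fieldType) (B : nat -> {poly C}) k : MPS B -> (B k)`_k = 1.
Proof.
move=> hB; have [hm hs] := hB k.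
by move/monicP: hm; rewrite /lead_coef hs.
Qed.

Lemma MPS_coef_gt (C : fieldType) (B : nat -> {poly C}) k j : MPS B -> (k < j)%N -> (B k)`_j = 0.
Proof.
move=> hB hkj; have [hm hs] := hB k.
by apply: nth_default; rewrite hs.
Qed.

Lemma decomp (C : fieldType) (B : nat -> {poly C}) k (p : {poly C}) :
  MPS B -> (size p <= k.+1)%N -> (size (p - p`_k *: B k)%R <= k)%N.
Proof.
move=> hB hp; apply/leq_sizeP => j hj; rewrite coefB coefZ.
case: (ltngtP k j) hj => // [hkj|->] _.
  rewrite (MPS_coef_gt hB hkj) mulr0 subr0; apply: nth_default.
  exact: leq_trans hp hkj.
by rewrite (MPS_coef _ hB) mulr1 subrr.
Qed.

Lemma size0 (C : fieldType) (p : {poly C}) : (size p <= 0)%N -> p = 0.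
Proof. by rewrite leqn0 size_poly_eq0 => /eqP. Qed.

Lemma fun_basis (C : fieldType) (B : nat -> {poly C}) (F : {poly C} -> C) :
  MPS B -> functional F -> (forall k, F (B k) = 0) -> forall p, F p = 0.
Proof.
move=> hB hF hk p.
have : (size p <= size p)%N by [].
move: {2}(size p) => n; elim: n p => [|n IH] p hp.
  by rewrite (size0 hp) fun0.
have := decomp hB hp => /IH h.
have -> : p = p`_n *: B n + (p - p`_n *: B n) by rewrite addrC subrK.
by rewrite funD // funZ // h hk mulr0 addr0.
Qed.

Lemma orth_low (C : fieldType) (B : nat -> {poly C}) u :
  MPS B -> functional u -> orthogonal_wrt B u ->
  forall n (g : {poly C}), (size g <= n)%N -> u (B n * g) = 0.
Proof.
move=> hB hu [ho _] n g hgn.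
move: (leqnn (size g)) hgn; move: {2 3}(size g) => k.
elim: k g => [|k IH] g hg hgn.
  by rewrite (size0 hg) mulr0 fun0.
have hk : (k < n)%N := hgn.
have -> : g = g`_k *: B k + (g - g`_k *: B k) by rewrite addrC subrK.
rewrite mulrDr -scalerAr funD // funZ // ho; last by rewrite neq_ltn hk orbT.
rewrite mulr0 add0r IH //; first exact: decomp.
exact: ltnW.
Qed.

Lemma size_addle (C : fieldType) (p q : {poly C}) m :
  (size p <= m)%N -> (size q <= m)%N -> (size (p + q)%R <= m)%N.
Proof. by move=> hp hq; apply: leq_trans (size_polyD _ _) _; rewrite geq_max hp hq. Qed.

Lemma size_suble (C : fieldType) (p q : {poly C}) m :
  (size p <= m)%N -> (size q <= m)%N -> (size (p - q)%R <= m)%N.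
Proof. by move=> hp hq; apply: size_addle; rewrite ?size_polyN. Qed.

Lemma size_mulle (C : fieldType) (p q : {poly C}) m k :
  (size p <= m.+1)%N -> (size q <= k)%N -> (size (p * q)%R <= m + k)%N.
Proof.
move=> hp hq; apply: leq_trans (size_polyMleq _ _) _.
lia.
Qed.

Lemma size_scalele (C : fieldType) (p : {poly C}) a m :
  (size p <= m)%N -> (size (a *: p) <= m)%N.
Proof. by move=> h; apply: leq_trans (size_scale_leq _ _) h. Qed.

Lemma size_derivle (C : fieldType) (p : {poly C}) m :
  (size p <= m.+1)%N -> (size p^`() <= m)%N.
Proof.
move=> h; apply/leq_sizeP => j hj; rewrite coef_deriv.
by rewrite nth_default ?mul0rn //; apply: leq_trans h _.
Qed.

Lemma size_Xle (C : fieldType) : (size ('X : {poly C}) <= 2)%N.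
Proof. by rewrite size_polyX. Qed.

Lemma size_Cle (C : fieldType) (c : C) m : (size (c%:P) <= m.+1)%N.
Proof. by rewrite size_polyC; case: (c != 0). Qed.

Lemma MPS0 (C : fieldType) (B : nat -> {poly C}) : MPS B -> B 0 = 1.
Proof.
move=> hB; have [hm hs] := hB 0.
rewrite (size1_polyC (eq_leq hs)).
by have := MPS_coef 0 hB => ->.
Qed.

Lemma nondeg (C : fieldType) (B : nat -> {poly C}) u :
  MPS B -> functional u -> orthogonal_wrt B u ->
  forall r : {poly C}, r != 0 -> u (r * B (size r).-1) != 0.
Proof.
move=> hB hu ho r hr.
have hs : size r = (size r).-1.+1 by rewrite prednK // size_poly_gt0.
move: (size r).-1 hs => d hs.
have hd := decomp hB (eq_leq hs).
have -> : r = r`_d *: B d + (r - r`_d *: B d) by rewrite addrC subrK.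
rewrite mulrDl -scalerAl funD // funZ // [_ * B d]mulrC (orth_low hB hu ho hd) addr0.
rewrite mulf_neq0 //; last by have [_ h] := ho; rewrite -expr2 h.
by rewrite -lead_coef_eq0 lead_coefE hs in hr.
Qed.


Lemma Lam_coef (C : fieldType) a0 a1 (p : {poly C}) i :
  (Lam a0 a1 p)`_i = rho a0 a1 i * p`_i.+1.
Proof.
rewrite /Lam /rho coefD !coefZ !coef_deriv coefXM /= coef_deriv.
ring.
Qed.

Lemma Lam_lin (C : fieldType) a0 a1 a (p q : {poly C}) :
  Lam a0 a1 (a *: p + q) = a *: Lam a0 a1 p + Lam a0 a1 q.
Proof.
rewrite /Lam !derivD !derivZ mulrDr -scalerAr !derivD !derivZ.
rewrite !scalerDr !scalerA [a1 * a]mulrC [a0 * a]mulrC.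
rewrite -!scalerA -!mul_polyC; ring.
Qed.

Lemma Lam1 (C : fieldType) a0 a1 : Lam a0 a1 (1 : {poly C}) = 0.
Proof. by rewrite /Lam -polyC1 derivC mulr0 derivC !scaler0 addr0. Qed.

Lemma pearsonB (C : fieldType) (u : {poly C} -> C) (l : {poly C}) :
  functional u -> (forall p, - u ('X * p^`()) + u (l * p) = 0) ->
  forall h, u ('X * h^`() - l * h) = 0.
Proof.
move=> hu hP h; rewrite funB //.
by apply/eqP; rewrite -oppr_eq0 opprB addrC hP.
Qed.

Lemma KA (C : fieldType) a0 a1 (B : nat -> {poly C}) u (s : C) :
  a1 != 0 -> MPS B -> functional u -> orthogonal_wrt B u ->
  (forall p, - u ('X * p^`()) + u ((s *: 'X - (a0 / a1 + 1)%:P) * p) = 0) ->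
  forall n (g : {poly C}), (size g <= n)%N -> u (Lam a0 a1 (B n.+1) * g) = 0.
Proof.
move=> ha1 hB hu ho hP n g hg.
have hP' := pearsonB hu hP.
set y := B n.+1; set l := s *: 'X - (a0 / a1 + 1)%:P.
set k := s *: g - g^`().
have E : Lam a0 a1 y * g = a1 *: (('X * (g * y^`())^`() - l * (g * y^`()))
   + ('X * (k * y)^`() - l * (k * y)) + y * (l * k - 'X * k^`())).
  rewrite /l /k /Lam.
  have ha : a0 = a1 * (a0 / a1) by rewrite mulrC divfK.
  move: (a0 / a1) ha => al ha.
  rewrite ha; rewrite !derivE -!mul_polyC !polyCM !polyCD; ring.
rewrite E /l funZ // funD // [u (_ + _)]funD // !hP' addr0 add0r.
rewrite (orth_low hB hu ho) ?mulr0 //.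
have hl : (size l <= 1.+1)%N by apply: size_suble; [apply: size_scalele; exact: size_Xle|exact: size_Cle].
have hk : (size k <= n)%N.
  apply: size_suble; first exact: size_scalele.
  by apply: size_derivle; apply: leqW.
rewrite -add1n; apply: size_suble; first exact: size_mulle.
apply: size_mulle; first exact: size_Xle.
by apply: size_derivle; apply: leqW.
Qed.

Lemma pearson_appell (C : fieldType) a0 a1 (B : nat -> {poly C}) u (s : C) :
  a1 != 0 -> MPS B -> functional u -> orthogonal_wrt B u ->
  (forall p, - u ('X * p^`()) + u ((s *: 'X - (a0 / a1 + 1)%:P) * p) = 0) ->
  forall n, Lam a0 a1 (B n.+1) = rho a0 a1 n *: B n.
Proof.
move=> ha1 hB hu ho hP n.
have hr : (size (Lam a0 a1 (B n.+1) - rho a0 a1 n *: B n)%R <= n)%N.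
  apply/leq_sizeP => j hj; rewrite coefB coefZ Lam_coef.
  case: (ltngtP n j) hj => // [hnj|<-] _.
    by rewrite !(MPS_coef_gt hB) ?mulr0 ?subr0.
  by rewrite !(MPS_coef _ hB) subrr.
apply/eqP; rewrite -subr_eq0; apply/negPn/negP => hr0.
have := nondeg hB hu ho hr0.
have hpos : (0 < size (Lam a0 a1 (B n.+1) - rho a0 a1 n *: B n)%R)%N by rewrite size_poly_gt0.
move: (size _).-1 (prednK hpos) hr => d hd hr.
have hdn : (d < n)%N by rewrite -hd in hr.
rewrite mulrBl funB // -scalerAl funZ // (KA ha1 hB hu ho hP); last by have [_ ->] := hB d.
have [ho1 _] := ho; rewrite ho1 ?mulr0 ?subr0 ?eqxx //.
by rewrite neq_ltn hdn orbT.
Qed.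

Lemma poly3 (C : fieldType) (p : {poly C}) :
  (size p <= 3)%N -> p = p`_2 *: 'X^2 + p`_1 *: 'X + (p`_0)%:P.
Proof.
move=> hp; apply/polyP => i.
rewrite !coefD !coefZ coefXn coefX coefC.
case: i => [|[|[|i]]] /=; rewrite ?mulr0 ?mulr1 ?addr0 ?add0r //.
by apply: nth_default; apply: leq_trans hp _.
Qed.

Lemma core (C : numFieldType) a0 a1 (u : {poly C} -> C) (B1 pi : {poly C}) (ka be : C) :
  a1 != 0 -> ka != 0 -> functional u -> u 1 != 0 -> B1 = 'X - be%:P -> u B1 = 0 ->
  (forall r : {poly C}, r != 0 -> exists g, u (r * g) != 0) ->
  (forall p, u (Lam a0 a1 p) = ka * u (B1 * p)) ->
  (forall p, u ('X * p^`()) = u (pi * p)) -> (size pi <= 3)%N ->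
  exists s, s != 0 /\
    forall p, - u ('X * p^`()) + u ((s *: 'X - (a0 / a1 + 1)%:P) * p) = 0.
Proof.
move=> ha1 hka hu hm0 hB1 huB1 hnd hA hP hs.
have Zh : forall h, u ('X * h^`() - pi * h) = 0 by move=> h; rewrite funB // hP subrr.
have Yh : forall p, u (Lam a0 a1 p - ka *: (B1 * p)) = 0.
  by move=> p; rewrite funB // funZ // hA subrr.
set tau := (a0 + a1)%:P + (a0 + 2 * a1) *: pi + a1 *: pi ^+ 2 - a1 *: ('X * pi^`())
   - ka *: ('X * B1).
have htau : forall p, u (tau * p) = 0.
  move=> p.
  have -> : tau * p = Lam a0 a1 ('X * p) - ka *: (B1 * ('X * p))
     - a1 *: ('X * ('X * p^`())^`() - pi * ('X * p^`()))
     - a1 *: ('X * (pi * p)^`() - pi * (pi * p))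
     - (a0 + 2 * a1) *: ('X * p^`() - pi * p).
    rewrite /tau /Lam !derivE -!mul_polyC !polyCD !polyCM; ring.
  by rewrite funB // funB // funB // !funZ // Yh !Zh !mulr0 !subr0.
have tau0 : tau = 0.
  apply/eqP; apply: contraT => /hnd [g]; by rewrite htau eqxx.
have hP1 := hP 1.
rewrite /tau (poly3 hs) hB1 in tau0.
rewrite (poly3 hs) in hP hP1.
move: (pi`_2) (pi`_1) (pi`_0) tau0 hP hP1 => A b c tau0 hP hP1.
have E : (a1 * A ^+ 2)%:P * 'X^4 + (2 * a1 * A * b)%:P * 'X^3
   + (a0 * A + a1 * (b ^+ 2 + 2 * A * c) - ka)%:P * 'X^2
   + ((a0 + a1) * b + 2 * a1 * b * c + ka * be)%:P * 'X
   + ((a0 + a1) + (a0 + 2 * a1) * c + a1 * c ^+ 2)%:P = 0.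
  rewrite -[X in _ = X]tau0 !derivE -!mul_polyC !polyCD !polyCM !polyCN; ring.
have cf : forall i, (((a1 * A ^+ 2)%:P * 'X^4 + (2 * a1 * A * b)%:P * 'X^3
   + (a0 * A + a1 * (b ^+ 2 + 2 * A * c) - ka)%:P * 'X^2
   + ((a0 + a1) * b + 2 * a1 * b * c + ka * be)%:P * 'X
   + ((a0 + a1) + (a0 + 2 * a1) * c + a1 * c ^+ 2)%:P) : {poly C})`_i = 0.
  by move=> i; rewrite E coef0.
have h4 := cf 4%N; have h2 := cf 2%N; have h1 := cf 1%N; have h0 := cf 0%N.
rewrite !coefD !coefCM !coefXn !coefX !coefC /= in h4 h2 h1 h0.
have hA0 : A = 0.
  move: h4; rewrite !mulr0 !addr0 mulr1 => /eqP.
  by rewrite mulf_eq0 (negbTE ha1) /= expf_eq0 /= => /eqP.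
subst A.
have hka2 : ka = a1 * b ^+ 2.
  apply/eqP; rewrite eq_sym -subr_eq0; apply/eqP; apply: etrans _ h2; ring.
have hb : b != 0.
  apply: contraNneq hka => hb0; by rewrite hka2 hb0 expr2 !mulr0.
have huX : u 'X = be * u 1.
  move: huB1; rewrite hB1 funB // -[be%:P]mulr1 mul_polyC funZ // => /eqP.
  by rewrite subr_eq0 => /eqP.
have hbc : b * be + c = 0.
  move: hP1; rewrite -polyC1 derivC mulr0 fun0 // mulr1 -[c%:P]mulr1 mul_polyC.
  rewrite !funD // !funZ // huX => /esym h.
  have : (b * be + c) * u 1 = 0 by rewrite -[RHS]h; ring.
  by move/eqP; rewrite mulf_eq0 (negbTE hm0) orbF => /eqP.
have fac : (c + 1) * (a1 * c + a1 + a0) = 0 by rewrite -[RHS]h0; ring.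
have hc : c = - (a0 / a1 + 1).
  move/eqP: fac; rewrite mulf_eq0 => /orP [/eqP hc1|/eqP hc2].
    have hc' : c = -1 by rewrite -[c](addrK 1) hc1 sub0r.
    have hbe : be = b^-1.
      by apply: (mulfI hb); rewrite divff // -[_ * be](addrK c) hbc hc' sub0r opprK.
    have h0b : a0 * b = 0.
      rewrite -[RHS]h1 hka2 hbe hc'; field; exact: hb.
    move/eqP: h0b; rewrite mulf_eq0 (negbTE hb) orbF => /eqP ->.
    by rewrite hc' mul0r add0r.
  have -> : c = (a1 * c + a1 + a0) / a1 - (a0 / a1 + 1) by field.
  by rewrite hc2 mul0r sub0r.
exists b; split => // p.
by rewrite hP scale0r add0r hc polyCN addNr.
Qed.

Lemma fun_lin2 (C : fieldType) (u : {poly C} -> C) (G H : {poly C} -> {poly C}) (k : C) :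
  functional u -> (forall a p q, G (a *: p + q) = a *: G p + G q) ->
  (forall a p q, H (a *: p + q) = a *: H p + H q) ->
  functional (fun p => u (G p) - k * u (H p)).
Proof. by move=> hu hG hH a p q; rewrite hG hH !funD // !funZ //; ring. Qed.

Lemma forward (C : numFieldType) a0 a1 (B : nat -> {poly C}) u :
  a1 != 0 -> a0 + a1 != 0 -> MPS B -> (forall n, Lam a0 a1 (B n.+1) = rho a0 a1 n *: B n) ->
  functional u -> orthogonal_wrt B u ->
  exists s, s != 0 /\
    forall p, - u ('X * p^`()) + u ((s *: 'X - (a0 / a1 + 1)%:P) * p) = 0.
Proof.
move=> ha1 hf1 hB hAp hu ho.
have hB0 := MPS0 hB.
have ho' := ho; move: ho' => [ho1 ho2].
have hm0 : u 1 != 0 by have := ho2 0%N; rewrite hB0 expr1n.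
have uB : forall k, (0 < k)%N -> u (B k) = 0.
  by move=> k hk; have := ho1 0%N k; rewrite hB0 mul1r => ->; rewrite // neq_ltn hk.
have hB1 : B 1%N = 'X - (- (B 1%N)`_0)%:P.
  have [_ hs] := hB 1%N.
  rewrite [LHS](poly3 (leqW (eq_leq hs))) (MPS_coef_gt hB (ltnSn 1)) (MPS_coef 1 hB).
  by rewrite scale0r add0r scale1r polyCN opprK.
move: (- (B 1%N)`_0) hB1 => be hB1.
set N := fun k => u (B k ^+ 2).
have hrho0 : rho a0 a1 0 != 0 by rewrite /rho mul1r mulr1.
set ka := rho a0 a1 0 * u 1 / N 1%N.
have hka : ka != 0 by apply: mulf_neq0; [exact: mulf_neq0|rewrite invr_eq0; exact: ho2].
have hA : forall p, u (Lam a0 a1 p) = ka * u (B 1%N * p).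
  move=> p; apply/eqP; rewrite -subr_eq0; apply/eqP; move: p.
  apply: (fun_basis hB (fun_lin2 ka hu (@Lam_lin _ a0 a1) _)).
    by move=> a p q; rewrite mulrDr scalerAr.
  case=> [|[|j]].
  - rewrite hB0 Lam1 fun0 // mulr1 uB //; ring.
  - rewrite hAp funZ // hB0 -expr2 /ka /N; field; exact: ho2.
  - rewrite hAp funZ // uB // ho1 //; ring.
set la := rho a0 a1 1 * N 1%N / N 2%N.
have hA2 : forall p, u (B 1%N * Lam a0 a1 p) = la * u (B 2%N * p).
  move=> p; apply/eqP; rewrite -subr_eq0; apply/eqP; move: p.
  apply: (fun_basis hB (fun_lin2 la hu _ _)).
  - by move=> a p q; rewrite Lam_lin mulrDr scalerAr.
  - by move=> a p q; rewrite mulrDr scalerAr.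
  case=> [|[|[|j]]].
  - rewrite hB0 Lam1 mulr0 fun0 // mulr1 uB //; ring.
  - rewrite hAp hB0 -scalerAr mulr1 funZ // uB // ho1 //; ring.
  - rewrite hAp -scalerAr funZ // -expr2 /la /N; field; exact: ho2.
  - rewrite hAp -scalerAr funZ // !ho1 //; ring.
have h2a1 : 2 * a1 != 0 by rewrite mulf_neq0 // pnatr_eq0.
set pi := (2 * a1)^-1 *: (ka *: (B 1%N ^+ 2) - la *: B 2%N - (a0 + a1)%:P).
have hP : forall p, u ('X * p^`()) = u (pi * p).
  move=> p.
  have E1 : Lam a0 a1 (B 1%N * p) = B 1%N * Lam a0 a1 p + (a0 + a1) *: p + (2 * a1) *: ('X * p^`()).
    rewrite hB1 /Lam !derivE -!mul_polyC !polyCD !polyCM; ring.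
  have E := hA (B 1%N * p).
  rewrite E1 !funD // hA2 !funZ // in E.
  rewrite /pi -scalerAl funZ // !mulrBl funB // funB // -!scalerAl !funZ // mul_polyC funZ //.
  have E2 : u (B 1%N ^+ 2 * p) = u (B 1%N * (B 1%N * p)) by rewrite expr2 mulrA.
  rewrite E2 -E; field; exact: ha1.
have hs : (size pi <= 3)%N.
  apply: size_scalele; apply: size_suble; last exact: size_Cle.
  apply: size_suble; apply: size_scalele; last by have [_ ->] := hB 2%N.
  have [_ h1] := hB 1%N; rewrite expr2; apply: (@size_mulle _ (B 1%N) (B 1%N) 1%N 2%N); by rewrite h1.
apply: (core ha1 hka hu hm0 hB1 (uB 1%N isT)) => //.
by move=> r hr; exists (B (size r).-1); exact: (nondeg hB hu ho hr).
Qed.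

Lemma affine_MPS (C : fieldType) c (B : nat -> {poly C}) : c != 0 -> MPS B -> MPS (affine c 0 B).
Proof.
move=> hc hB n; have [hm hs] := hB n.
have sq : size (c *: 'X + 0%:P : {poly C}) = 2%N by rewrite addr0 size_scale // size_polyX.
have lq : lead_coef (c *: 'X + 0%:P : {poly C}) = c by rewrite addr0 lead_coefZ lead_coefX mulr1.
have hl : lead_coef (B n \Po (c *: 'X + 0%:P)) = c ^+ n.
  by rewrite lead_coef_comp ?sq // lq hs (monicP hm) mul1r.
have hnz : c ^+ n != 0 by rewrite expf_neq0.
split; first by apply/monicP; rewrite /affine lead_coefZ hl mulVf.
rewrite /affine size_scale ?invr_neq0 //.
have hpos : (0 < size (B n \Po (c *: 'X + 0%:P)))%N.
  by rewrite size_poly_gt0 -lead_coef_eq0 hl.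
by rewrite -(prednK hpos) size_comp_poly hs sq muln1.
Qed.

Lemma affine_comp (C : fieldType) c (B : nat -> {poly C}) n : c != 0 ->
  (affine c 0 B n) \Po (c^-1 *: 'X) = (c ^+ n)^-1 *: B n.
Proof.
move=> hc; rewrite /affine comp_polyZ -comp_polyA comp_polyD comp_polyZ comp_polyX comp_polyC.
by rewrite addr0 scalerA divff // scale1r comp_polyXr.
Qed.

Lemma affine_orth (C : fieldType) c (B : nat -> {poly C}) u : c != 0 -> functional u ->
  orthogonal_wrt B u ->
  functional (fun p => u (p \Po (c^-1 *: 'X))) /\
  orthogonal_wrt (affine c 0 B) (fun p => u (p \Po (c^-1 *: 'X))).
Proof.
move=> hc hu [ho1 ho2]; split.
  by move=> a p q /=; rewrite comp_polyD comp_polyZ hu.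
split => [n m hnm|n] /=.
  by rewrite comp_polyM !affine_comp // -scalerAl -scalerAr !funZ // ho1 // !mulr0.
rewrite expr2 comp_polyM !affine_comp // -scalerAl -scalerAr !funZ // -expr2.
by rewrite !mulf_neq0 // invr_neq0 // expf_neq0.
Qed.

Lemma affine_pearson (C : fieldType) (u : {poly C} -> C) (c s k : C) : c != 0 -> functional u ->
  (forall p, - u ('X * p^`()) + u ((s *: 'X - k%:P) * p) = 0) ->
  forall p, - u (('X * p^`()) \Po (c^-1 *: 'X)) + u (((s * c) *: 'X - k%:P) * p \Po (c^-1 *: 'X)) = 0.
Proof.
move=> hc hu hP p.
have h1 : ('X * p^`()) \Po (c^-1 *: 'X) = 'X * (p \Po (c^-1 *: 'X))^`().
  rewrite comp_polyM comp_polyX deriv_comp derivZ derivX -!mul_polyC; ring.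
have h2 : ((s * c) *: 'X - k%:P) * p \Po (c^-1 *: 'X) = (s *: 'X - k%:P) * (p \Po (c^-1 *: 'X)).
  by rewrite comp_polyM comp_polyB comp_polyZ comp_polyX comp_polyC scalerA mulfK.
by rewrite h1 h2 hP.
Qed.

Lemma affine_inv (C : fieldType) c (B : nat -> {poly C}) n : c != 0 ->
  affine c 0 (affine c^-1 0 B) n = B n.
Proof.
move=> hc; rewrite /affine comp_polyZ -comp_polyA comp_polyD comp_polyZ comp_polyX comp_polyC.
rewrite polyC0 !addr0 scalerA (scalerA c^-1) mulVf // scale1r comp_polyXr exprVn invrK mulVf ?scale1r //.
by rewrite expf_neq0.
Qed.

Unset Implicit Arguments.

Theorem proposition8 (R : rcfType) (a0 a1 : R[i]) :
  a1 != 0 ->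
  (forall n : nat, (0 < n)%N -> a0 + a1 * n%:R != 0) ->
  forall B : nat -> {poly R[i]},
    (Lam_Appell a0 a1 B /\ orthogonal_MPS B) <->
    (exists (L : nat -> {poly R[i]}) (c : R[i]),
        Laguerre (a0 / a1) L /\ c != 0 /\ forall n, B n = affine c 0 L n).
Proof.
move=> ha1 hf B; split.
  move=> [[hB hAp] [_ [u [hu ho]]]].
  have hf1 : a0 + a1 != 0 by have := hf 1%N isT; rewrite mulr1.
  have [s [hs hP]] := forward ha1 hf1 hB hAp hu ho.
  have hs' : s^-1 != 0 by rewrite invr_neq0.
  exists (affine s^-1 0 B), s; split; last by split => // n; rewrite affine_inv.
  split; first exact: affine_MPS.
  have [hv hov] := affine_orth hs' hu ho.
  exists (fun p => u (p \Po (s^-1^-1 *: 'X))); split => //; split => // p.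
  have := affine_pearson hs' hu hP p; rewrite mulfV // scale1r => h.
  by rewrite -h.
move=> [L [c [[hL [u [hu [ho hP]]]] [hc hBe]]]].
have hP1 : forall p, - u ('X * p^`()) + u ((1 *: 'X - (a0 / a1 + 1)%:P) * p) = 0.
  by move=> p; rewrite scale1r hP.
have hP2 := affine_pearson hc hu hP1; rewrite mul1r in hP2.
have [hv hov] := affine_orth hc hu ho.
have hA := affine_MPS hc hL.
have hMB : MPS B by move=> n; rewrite hBe; exact: hA.
have hoB : orthogonal_wrt B (fun p => u (p \Po (c^-1 *: 'X))).
  have [h1 h2] := hov; split => [n m hnm|n]; rewrite !hBe; [exact: h1|exact: h2].
split; last by split => //; exists (fun p => u (p \Po (c^-1 *: 'X))).
split => // n.
exact: (pearson_appell ha1 hMB hv hoB hP2).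
Qed.
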